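(* Let $\mathfrak L$ be a color gLt-algebra admitting a multiplicative basis $\mathfrak B=\{e_i\}_{i\in I}$. Then $\mathfrak L=\bigoplus_{[i]\in I/\sim}\mathfrak J_{[i]}$, where each $\mathfrak J_{[i]}$ is a color gLt-ideal of $\mathfrak L$ admitting a multiplicative basis inherited by the one of $\mathfrak L$ (namely $\{e_j\}_{j\in[i]}$).
   Context: Let $\mathbb F$ be a field, $\mathbb G$ an abelian group, $n\ge 2$, and $\epsilon:\mathbb G\times\mathbb G\to\mathbb F\setminus\{0\}$ a bicharacter ($\epsilon(k,g+h)=\epsilon(k,g)\epsilon(k,h)$, $\epsilon(g+h,k)=\epsilon(g,k)\epsilon(h,k)$, $\epsilon(g,h)\epsilon(h,g)=1$). A graded $n$-ary algebra is a $\mathbb G$-graded vector space $\mathfrak L=\bigoplus_{g\in\mathbb G}\mathfrak L_g$ with an $n$-linear map $\langle\cdot,\dots,\cdot\rangle:\mathfrak L^n\to\mathfrak L$ such that $\langle\mathfrak L_{g_1},\dots,\mathfrak L_{g_n}\rangle\subset\mathfrak L_{g_1+\dots+g_n}$. For $\sigma\in\mathbb S_n$ write $\langle x_1,\dots,x_n\rangle_\sigma:=\langle x_{\sigma(1)},\dots,x_{\sigma(n)}\rangle$; for subsets $A_1,\dots,A_n$, $\langle A_1,\dots,A_n\rangle_\sigma$ denotes the linear span of all $\langle x_1,\dots,x_n\rangle_\sigma$ with $x_r\in A_r$. A color gLt-algebra is a graded $n$-ary algebra satisfying, for each $k=1,\dots,n$ and fixed scalars $\alpha^{\sigma_1,\sigma_2}_{i,j,k}\in\mathbb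 F$, the color version (each term on the right multiplied by the product of values of $\epsilon$ on the degrees of the homogeneous arguments transposed in passing from the left-hand order to the order of that term) of the identity $\langle y_1,\dots,y_{k-1},\langle x_1,\dots,x_n\rangle,y_k,\dots,y_{n-1}\rangle=\sum_{1\le i,j\le n,\,\sigma_1\in\mathbb S_n,\,\sigma_2\in\mathbb S_{n-1}}\alpha^{\sigma_1,\sigma_2}_{i,j,k}\langle x_{\sigma_1(1)},\dots,x_{\sigma_1(i-1)},\langle y_{\sigma_2(1)},\dots,y_{\sigma_2(j-1)},x_{\sigma_1(i)},y_{\sigma_2(j)},\dots,y_{\sigma_2(n-1)}\rangle,x_{\sigma_1(i+1)},\dots,x_{\sigma_1(n)}\rangle$. A $\mathbb G$-graded subspace $\mathcal I\subset\mathfrak L$ is a color gLt-ideal if $\langle\mathcal I,\mathfrak L,\dots,\mathfrak L\rangle_\sigma\subset\mathcal I$ for every $\sigma\in\mathbb S_n$. A basis $\mathfrak B=\{e_i\}_{i\in I}$ of homogeneous elements of $\mathfrak L$ is multiplicative if for all $i_1,\dots,i_n\in I$, $\langle e_{i_1},\dots,e_{i_n}\rangle\in\mathbb Fe_j$ for some $j\in I$. Such a basis is regarded as a quasi-multiplicative basis with $\mathbb V=0$ and $\mathbb W=\mathfrak L$ (quasi-multiplicative basis: $\mathfrak L=\mathbb V\oplus\mathbb W$, $\mathbb V,\mathbb W\ne0$ graded subspaces, $\{e_i\}_{i\in I}$ a homogeneous basis of $\mathbb W$ with: products of basis elements in some $\mathbb Fe_j$ or in $\mathbb V$; for $0<k<n$,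 $\langle e_{i_1},\dots,e_{i_k},\mathbb V,\dots,\mathbb V\rangle_\sigma\subset\mathbb Fe_{j_\sigma}$; $\langle\mathbb V,\dots,\mathbb V\rangle$ in some $\mathbb Fe_j$ or in $\mathbb V$). Index maps: let $v$ be a symbol not in $I$, $\mathfrak I:=I\,\dot\cup\,\{v\}$; for each $j\in\mathfrak I$ take a new symbol $\overline j$, $\overline I:=\{\overline i:i\in I\}$, $\overline{\mathfrak I}:=\overline I\,\dot\cup\,\{\overline v\}$; set $\overline{(\overline j)}:=j$, $\overline J:=\{\overline j:j\in J\}$ for a set $J$ of symbols ($\overline\emptyset=\emptyset$). Put $u_j:=e_j$ for $j\in I$ and $u_v:=\mathbb V$. For $\sigma\in\mathbb S_n$ and $(j_1,\dots,j_n)\in\mathfrak I^n$ let $a_\sigma(j_1,\dots,j_n)=\{r\}$ if $r\in I$ and $0\ne\langle u_{j_1},\dots,u_{j_n}\rangle_\sigma\subset\mathbb Fe_r$, $=\{v\}$ if $0\ne\langle u_{j_1},\dots,u_{j_n}\rangle_\sigma\subset\mathbb V$, and $=\emptyset$ otherwise. For $j,j_2,\dots,j_n\in\mathfrak I$ let $b_\sigma(j,\overline j_2,\dots,\overline j_n):=\{x\in\mathfrak I: a_\sigma(x,j_2,\dots,j_n)=\{j\}\}$. Define $\mu$ on $(\mathfrak I\,\dot\cup\,\overline{\mathfrak I})\times(\mathfrak I^{n-1}\,\dot\cup\,\overline{\mathfrak I}^{n-1})$ with values subsets of $\mathfrak I$ by: $\mu(j,j_1,\dots,j_{n-1})=\bigcup_{\sigma\in\mathbb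 S_n}a_\sigma(j,j_1,\dots,j_{n-1})$ for $j,j_1,\dots,j_{n-1}\in\mathfrak I$; $\mu(j,\overline j_1,\dots,\overline j_{n-1})=\bigcup_{\sigma\in\mathbb S_n}b_\sigma(j,\overline j_1,\dots,\overline j_{n-1})$ for $j,j_1,\dots,j_{n-1}\in\mathfrak I$; $\mu(\overline j,j_1,\dots,j_{n-1})=\bigcup_{1\le k\le n-1,\ \sigma\in\mathbb S_n}b_\sigma(j_k,\overline j,\overline j_1,\dots,\overline j_{k-1},\overline j_{k+1},\dots,\overline j_{n-1})$ for $j,j_1,\dots,j_{n-1}\in\mathfrak I$; and $\mu(\overline j,\overline j_1,\dots,\overline j_{n-1})=\emptyset$. Define $\phi$ on pairs $(J,X)$ with $J\subset I\,\dot\cup\,\overline I$ and $X\in\mathfrak I^{n-1}\,\dot\cup\,\overline{\mathfrak I}^{n-1}$ by $\phi(\emptyset,X)=\emptyset$ and, for $J\ne\emptyset$, $\phi(J,X):=K\cup\overline K$ where $K:=\big(\bigcup_{j\in J}\mu(j,X)\big)\setminus\{v\}$. Connections: for distinct $i,j\in I$, $i$ is connected to $j$ if there exist $t\ge1$, $X_1,\dots,X_t\in\mathfrak I^{n-1}\,\dot\cup\,\overline{\mathfrak I}^{n-1}$ and $\widetilde i\in\{i,\overline i\}$ such that $\phi(\{\widetilde i\},X_1)\ne\emptyset$, …, $\phi(\cdots\phi(\{\widetilde i\},X_1)\cdots,X_{t-1})\ne\emptyset$, and $j\in\phi(\cdots\phi(\phi(\{\widetilde i\},X_1),X_2)\cdots,X_t)$;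 every $i$ is connected to itself. Being connected is an equivalence relation $\sim$ on $I$; $[i]$ denotes the class of $i$. Define $\mathbb V_{[i]}:=\big(\sum_{i_1,\dots,i_n\in[i]}\mathbb F\langle e_{i_1},\dots,e_{i_n}\rangle\big)\cap\mathbb V$, $\mathbb W_{[i]}:=\bigoplus_{j\in[i]}\mathbb Fe_j$, and $\mathfrak J_{[i]}:=\mathbb V_{[i]}\oplus\mathbb W_{[i]}$ (here $\mathbb V_{[i]}=0$). *)

(* Defs.v *)
(* Arity n of the algebra is encoded as n = m.+2 (i.e. n >= 2);
   S_{n-1} is 'S_m.+1, tails of length n-1 are indexed by 'I_m.+1. *)
From HB Require Import structures.
From mathcomp Require Import all_boot all_order all_algebra all_fingroup.
Set Implicit Arguments. Unset Strict Implicit. Unset Printing Implicit Defensive.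
Import GRing.Theory.
Local Open Scope ring_scope.

Definition subspace {F : fieldType} {L : lmodType F} (P : L -> Prop) :=
  P 0 /\ forall (a : F) x y, P x -> P y -> P (a *: x + y).

Definition span {F : fieldType} {L : lmodType F} (S : L -> Prop) : L -> Prop :=
  fun x => exists (k : nat) (v : 'I_k -> L) (a : 'I_k -> F),
    (forall t, S (v t)) /\ x = \sum_(t < k) a t *: v t.

Definition direct_sum {F : fieldType} {L : lmodType F} {J : Type} (W : J -> L -> Prop) :=
  (forall j, subspace (W j)) /\
  (forall x : L, exists (k : nat) (c : 'I_k -> J) (y : 'I_k -> L),
      (forall t, W (c t) (y t)) /\ x = \sum_(t < k) y t) /\
  (forall (k : nat) (c : 'I_k -> J) (y : 'I_k -> L), injective c ->
      (forall t, W (c t) (y t)) -> \sum_(t < k) y t = 0 -> forall t, y t = 0).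

Definition bicharacter {F : fieldType} {G : zmodType} (eps : G -> G -> F) :=
  (forall g h, eps g h <> 0) /\
  (forall k g h, eps k (g + h) = eps k g * eps k h) /\
  (forall k g h, eps (g + h) k = eps g k * eps h k) /\
  (forall g h, eps g h * eps h g = 1).

(* insert a at position k (0-based) into a sequence z of length p *)
Definition ins {T : Type} {p : nat} (k : 'I_p.+1) (a : T) (z : 'I_p -> T) : 'I_p.+1 -> T :=
  fun r => match unlift k r with None => a | Some r' => z r' end.

Definition multilinear {F : fieldType} {L : lmodType F} {m : nat}
  (prod : ('I_m.+2 -> L) -> L) :=
  forall (x : 'I_m.+2 -> L) (k : 'I_m.+2) (a : F) (y z : L),
    prod (fun r => if r == k then a *: y + z else x r)
    = a *: prod (fun r => if r == k then y else x r)
      + prod (fun r => if r == k then z else x r).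

(* Lg g is the homogeneous component L_g *)
Definition graded_algebra {F : fieldType} {G : zmodType} {L : lmodType F} {m : nat}
  (Lg : G -> L -> Prop) (prod : ('I_m.+2 -> L) -> L) :=
  multilinear prod /\ direct_sum Lg /\
  (forall (g : 'I_m.+2 -> G) (x : 'I_m.+2 -> L),
      (forall r, Lg (g r) (x r)) -> Lg (\sum_(r < m.+2) g r) (prod x)).

(* Labels of the 2n-1 arguments of the identity: inl r = x_{r+1}, inr s = y_{s+1}. *)
Definition lab (m : nat) := ('I_m.+2 + 'I_m.+1)%type.

(* 0-based position of an argument in the left-hand side
   <y_1,..,y_{k-1},<x_1,..,x_n>,y_k,..,y_{n-1}>, k 0-based *)
Definition posL {m : nat} (k : 'I_m.+2) (l : lab m) : nat :=
  match l with
  | inl r => (k + r)%N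
  | inr s => if (s < k)%N then nat_of_ord s else (s + m.+2)%N
  end.

(* 0-based position of an argument in the right-hand side term
   <x_{s1(1)},..,x_{s1(i-1)},<y_{s2(1)},..,y_{s2(j-1)},x_{s1(i)},y_{s2(j)},..>,x_{s1(i+1)},..>
   (i, j 0-based) *)
Definition posR {m : nat} (i j : 'I_m.+2) (s1 : 'S_m.+2) (s2 : 'S_m.+1) (l : lab m) : nat :=
  match l with
  | inl q => let r := (s1^-1)%g q in
             if (r < i)%N then nat_of_ord r
             else if r == i then (i + j)%N else (r + m.+1)%N
  | inr s => let p := (s2^-1)%g s in
             (i + (if (p < j)%N then nat_of_ord p else p.+1))%N
  end.

(* product of eps(deg a, deg b) over all pairs of arguments a, b such that a
   precedes b on the left-hand side and b precedes a in the right-hand term *)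
Definition color_sign {F : fieldType} {G : zmodType} {m : nat} (eps : G -> G -> F)
  (dx : 'I_m.+2 -> G) (dy : 'I_m.+1 -> G)
  (k i j : 'I_m.+2) (s1 : 'S_m.+2) (s2 : 'S_m.+1) : F :=
  let deg (l : lab m) := match l with inl r => dx r | inr s => dy s end in
  \prod_(a : lab m) \prod_(b : lab m |
      (posL k a < posL k b)%N && (posR i j s1 s2 b < posR i j s1 s2 a)%N)
     eps (deg a) (deg b).

Definition color_gLt_algebra {F : fieldType} {G : zmodType} {L : lmodType F} {m : nat}
  (eps : G -> G -> F) (Lg : G -> L -> Prop) (prod : ('I_m.+2 -> L) -> L) :=
  graded_algebra Lg prod /\
  exists alpha : 'I_m.+2 -> 'I_m.+2 -> 'I_m.+2 -> 'S_m.+2 -> 'S_m.+1 -> F,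
  forall (k : 'I_m.+2) (dx : 'I_m.+2 -> G) (dy : 'I_m.+1 -> G)
         (x : 'I_m.+2 -> L) (y : 'I_m.+1 -> L),
    (forall r, Lg (dx r) (x r)) -> (forall s, Lg (dy s) (y s)) ->
    prod (ins k (prod x) y) =
    \sum_(i < m.+2) \sum_(j < m.+2) \sum_(s1 : 'S_m.+2) \sum_(s2 : 'S_m.+1)
      (alpha i j k s1 s2 * color_sign eps dx dy k i j s1 s2) *:
      prod (fun r => if r == i
                     then prod (ins j (x (s1 i)) (fun s => y (s2 s)))
                     else x (s1 r)).

(* <A_1,...,A_n>_sigma : span of all <x_{sigma(1)},...,x_{sigma(n)}>, x_r in A_r *)
Definition prodset {F : fieldType} {L : lmodType F} {m : nat}
  (prod : ('I_m.+2 -> L) -> L) (sigma : 'S_m.+2) (A : 'I_m.+2 -> L -> Prop) : L -> Prop :=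
  span (fun z => exists x : 'I_m.+2 -> L, (forall r, A r (x r)) /\ z = prod (fun r => x (sigma r))).

Definition graded_subspace {F : fieldType} {G : zmodType} {L : lmodType F}
  (Lg : G -> L -> Prop) (J : L -> Prop) :=
  subspace J /\
  forall x, J x -> exists (k : nat) (c : 'I_k -> G) (y : 'I_k -> L),
    (forall t, Lg (c t) (y t) /\ J (y t)) /\ x = \sum_(t < k) y t.

Definition color_ideal {F : fieldType} {G : zmodType} {L : lmodType F} {m : nat}
  (Lg : G -> L -> Prop) (prod : ('I_m.+2 -> L) -> L) (J : L -> Prop) :=
  graded_subspace Lg J /\
  forall sigma : 'S_m.+2,
    forall z, prodset prod sigma (fun r => if r == ord0 then J else (fun _ => True)) z -> J z.

Definition mult_basis {F : fieldType} {G : zmodType} {L : lmodType F} {m : nat} {I : Type}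
  (Lg : G -> L -> Prop) (prod : ('I_m.+2 -> L) -> L)
  (P : L -> Prop) (Iset : I -> Prop) (e : I -> L) :=
  (forall i, Iset i -> exists g, Lg g (e i)) /\
  (forall (k : nat) (c : 'I_k -> I) (a : 'I_k -> F), injective c ->
     (forall t, Iset (c t)) -> \sum_(t < k) a t *: e (c t) = 0 -> forall t, a t = 0) /\
  (forall x, P x <-> exists (k : nat) (c : 'I_k -> I) (a : 'I_k -> F),
       (forall t, Iset (c t)) /\ x = \sum_(t < k) a t *: e (c t)) /\
  (forall idx : 'I_m.+2 -> I, (forall r, Iset (idx r)) ->
     exists j, Iset j /\ exists a : F, prod (fun r => e (idx r)) = a *: e j).

(* The symbol set frak I = I + {v} is option I (None = v);
   a barred symbol is encoded by the flag true.                        *)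

Section Connections.
Context {F : fieldType} {L : lmodType F} {m : nat} {I : Type}.
Variables (V : L -> Prop) (prod : ('I_m.+2 -> L) -> L) (e : I -> L).

Definition u_ (o : option I) : L -> Prop :=
  match o with Some i => fun x => x = e i | None => V end.

Definition a_sig (sigma : 'S_m.+2) (js : 'I_m.+2 -> option I) : option I -> Prop :=
  fun o =>
    let P := prodset prod sigma (fun r => u_ (js r)) in
    (exists z, P z /\ z <> 0) /\
    match o with
    | Some r => forall z, P z -> exists c : F, z = c *: e r
    | None => forall z, P z -> V z
    end.

(* b_sigma(j, bar j_2, ..., bar j_n) *)
Definition b_sig (sigma : 'S_m.+2) (j : option I) (tl : 'I_m.+1 -> option I) :
  option I -> Prop :=
  fun x => forall o, a_sig sigma (ins ord0 x tl) o <-> o = j.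

Definition Xtype := (bool * ('I_m.+1 -> option I))%type.

Definition mu (j : bool * option I) (X : Xtype) : option I -> Prop :=
  match j.1, X.1 with
  | false, false => fun o => exists sigma, a_sig sigma (ins ord0 j.2 X.2) o
  | false, true => fun o => exists sigma, b_sig sigma j.2 X.2 o
  | true, false => fun o => exists (k : 'I_m.+1) sigma,
                     b_sig sigma (X.2 k) (ins ord0 j.2 (fun r => X.2 (lift k r))) o
  | true, true => fun _ => False
  end.

Definition phi (J : bool * I -> Prop) (X : Xtype) : bool * I -> Prop :=
  fun z => exists j, J j /\ mu (j.1, Some j.2) X (Some z.2).

Definition connected (i j : I) : Prop :=
  i = j \/
  (i <> j /\ exists (Xs : seq Xtype) (b : bool),
     (0 < size Xs)%N /\
     (forall k, (0 < k < size Xs)%N ->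
        exists z, foldl phi (fun z => z = (b, i)) (take k Xs) z) /\
     foldl phi (fun z => z = (b, i)) Xs (false, j)).

Definition cls (i : I) : I -> Prop := fun j => connected i j.

Definition conn_classes := {C : I -> Prop | exists i, C = cls i}.

Definition V_cl (C : I -> Prop) : L -> Prop := fun x =>
  span (fun z => exists idx : 'I_m.+2 -> I, (forall r, C (idx r)) /\
                                          z = prod (fun r => e (idx r))) x /\ V x.

Definition W_cl (C : I -> Prop) : L -> Prop := span (fun z => exists j, C j /\ z = e j).

Definition J_cl (C : I -> Prop) : L -> Prop :=
  fun x => exists a b, V_cl C a /\ W_cl C b /\ x = a + b.

End Connections.

Definition zero_sp {F : fieldType} (L : lmodType F) : L -> Prop := fun x => x = 0.
Arguments zero_sp {F} L _.

(* Main.v *)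
Require Import Defs.
From HB Require Import structures.
From mathcomp Require Import all_boot all_order all_algebra all_fingroup.
From Stdlib Require Import ClassicalEpsilon FunctionalExtensionality PropExtensionality ProofIrrelevance.
Set Implicit Arguments. Unset Strict Implicit. Unset Printing Implicit Defensive.
Import GRing.Theory.
Local Open Scope ring_scope.

Definition ceq (T : Type) := T.
Definition ceq_op (T : Type) (x y : ceq T) : bool :=
  if excluded_middle_informative (x = y) then true else false.
Lemma ceq_opP (T : Type) : Equality.axiom (@ceq_op T).
Proof. by move=> x y; rewrite /ceq_op; case: excluded_middle_informative => h; constructor. Qed.
HB.instance Definition _ (T : Type) := hasDecEq.Build (ceq T) (@ceq_opP T).

Lemma split_lshift m n (u : 'I_m) : split (lshift n u) = inl u.
Proof. exact: (@unsplitK m n (inl u)). Qed.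
Lemma split_rshift m n (u : 'I_n) : split (rshift m u) = inr u.
Proof. exact: (@unsplitK m n (inr u)). Qed.

Section Lin.
Variables (F : fieldType) (L : lmodType F).

Lemma span_sub (S P : L -> Prop) : subspace P -> (forall x, S x -> P x) ->
  forall x, Defs.span S x -> P x.
Proof.
move=> [P0 Pl] SP x [k [v [a [Sv ->]]]].
elim/big_ind: _ => //.
  by move=> u w Pu Pw; have := Pl 1 u w Pu Pw; rewrite scale1r.
move=> t _; have := Pl (a t) (v t) 0 (SP _ (Sv t)) P0; by rewrite addr0.
Qed.

Lemma span_subspace (S : L -> Prop) : subspace (Defs.span S).
Proof.
split.
  by exists 0%N, (fun _ => 0), (fun _ => 0); split; [case | rewrite big_ord0].
move=> a x y [k1 [v1 [a1 [S1 ->]]]] [k2 [v2 [a2 [S2 ->]]]].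
exists (k1 + k2)%N, (fun r => match split r with inl u => v1 u | inr u => v2 u end),
  (fun r => match split r with inl u => a * a1 u | inr u => a2 u end).
split.
  by move=> t; case: (split t).
rewrite big_split_ord /= scaler_sumr; congr (_ + _); apply: eq_bigr => t _.
  by rewrite split_lshift scalerA.
by rewrite split_rshift.
Qed.

Lemma span_in (S : L -> Prop) x : S x -> Defs.span S x.
Proof.
move=> Sx; exists 1%N, (fun _ => x), (fun _ => 1); split => //.
by rewrite big_ord1 scale1r.
Qed.

Lemma subspace_sum (P : L -> Prop) (k : nat) (y : 'I_k -> L) (Q : pred 'I_k) :
  subspace P -> (forall t, Q t -> P (y t)) -> P (\sum_(t < k | Q t) y t).
Proof.
move=> [P0 Pl] Py; elim/big_ind: _ => // u w Pu Pw.
by have := Pl 1 u w Pu Pw; rewrite scale1r.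
Qed.

Lemma subspaceN (P : L -> Prop) x : subspace P -> P x -> P (- x).
Proof. by move=> [P0 Pl] Px; have := Pl (-1) x 0 Px P0; rewrite addr0 scaleN1r. Qed.

Variable (I : Type) (e : I -> L).
Hypothesis indep : forall (k : nat) (c : 'I_k -> I) (a : 'I_k -> F), injective c ->
     \sum_(t < k) a t *: e (c t) = 0 -> forall t, a t = 0.

Lemma group_sum (k : nat) (c : 'I_k -> ceq I) (a : 'I_k -> F) :
  \sum_(t < k) a t *: e (c t) =
  \sum_(j <- undup (map c (enum 'I_k))) (\sum_(t < k | c t == j) a t) *: e j.
Proof.
set s := undup _.
have -> : \sum_(j <- s) (\sum_(t < k | c t == j) a t) *: e j =
          \sum_(j <- s) \sum_(t < k) (if c t == j then a t *: e (c t) else 0).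
  apply: eq_bigr => j _; rewrite scaler_suml big_mkcond /=; apply: eq_bigr => t _.
  by case: eqP => // ->.
rewrite exchange_big /=; apply: eq_bigr => t _.
have ins : c t \in s by rewrite mem_undup; apply: map_f; rewrite mem_enum.
rewrite (bigD1_seq (c t) ins (undup_uniq _)) /= eqxx big1 ?addr0 // => j.
by rewrite eq_sym => /negbTE ->.
Qed.

Lemma group_zero (k : nat) (c : 'I_k -> ceq I) (a : 'I_k -> F) :
  \sum_(t < k) a t *: e (c t) = 0 -> forall j : ceq I, \sum_(t < k | c t == j) a t = 0.
Proof.
rewrite group_sum => H j.
set s := undup _ in H.
have [js|jns] := boolP (j \in s); last first.
  rewrite big1 // => t /eqP ct; case/negP: jns; rewrite -ct mem_undup.
  by apply: map_f; rewrite mem_enum.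
rewrite (big_tnth _ _ s) in H.
have U : injective (tnth (in_tuple s)).
  move=> u w; rewrite !(tnth_nth j) /= => /eqP; rewrite nth_uniq ?undup_uniq //.
  by move=> /eqP /val_inj.
have := indep U H.
case: (seq_tnthP js) => t -> => /(_ t) //.
Qed.

Definition Wq (Q : I -> Prop) : L -> Prop := Defs.span (fun z => exists j, Q j /\ z = e j).

Lemma Wq_repr (Q : I -> Prop) x : Wq Q x ->
  exists k (c : 'I_k -> I) (a : 'I_k -> F), (forall t, Q (c t)) /\ x = \sum_(t < k) a t *: e (c t).
Proof.
move=> [k [v [a [Sv ->]]]].
pose c t := proj1_sig (constructive_indefinite_description _ (Sv t)).
have Hc t : Q (c t) /\ v t = e (c t) := proj2_sig (constructive_indefinite_description _ (Sv t)).
exists k, c, a; split; first by move=> t; case: (Hc t).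
by apply: eq_bigr => t _; case: (Hc t) => _ ->.
Qed.

Lemma Wq_disj (Q : I -> Prop) x : Wq Q x -> Wq (fun j => ~ Q j) x -> x = 0.
Proof.
move=> /Wq_repr [k1 [c1 [a1 [Q1 E1]]]] /Wq_repr [k2 [c2 [a2 [Q2 E2]]]].
pose c : 'I_(k1 + k2) -> ceq I := fun r => match split r with inl u => c1 u | inr u => c2 u end.
pose a : 'I_(k1 + k2) -> F := fun r => match split r with inl u => a1 u | inr u => - a2 u end.
have S0 : \sum_(t < k1 + k2) a t *: e (c t) = 0.
  rewrite big_split_ord /= /a /c.
  under eq_bigr do rewrite split_lshift.
  under [X in _ + X]eq_bigr do rewrite split_rshift scaleNr.
  by rewrite sumrN -E1 -E2 subrr.
have G := group_zero S0.
rewrite E1 (group_sum c1 a1); apply: big1 => j _.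
case: (excluded_middle_informative (Q j)) => Qj; last first.
  rewrite big1 ?scale0r // => t /eqP ct; by case: Qj; rewrite -ct.
have := G j; rewrite big_split_ord /= /a /c.
under eq_bigl do rewrite split_lshift.
under eq_bigr do rewrite split_lshift.
rewrite [X in _ + X]big1 ?addr0 => [->|t]; first by rewrite scale0r.
by rewrite split_rshift => /eqP ct; case: (Q2 t); rewrite ct.
Qed.

End Lin.

Lemma ins_k (T : Type) p (k : 'I_p.+1) (a : T) z : ins k a z k = a.
Proof. by rewrite /ins unlift_none. Qed.
Lemma ins_lift (T : Type) p (k : 'I_p.+1) (a : T) z r : ins k a z (lift k r) = z r.
Proof. by rewrite /ins liftK. Qed.

Section Conn.
Variables (F : fieldType) (L : lmodType F) (m : nat) (I : Type).
Variables (prod : ('I_m.+2 -> L) -> L) (e : I -> L).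
Hypothesis indep : forall (k : nat) (c : 'I_k -> I) (a : 'I_k -> F), injective c ->
     \sum_(t < k) a t *: e (c t) = 0 -> forall t, a t = 0.
Local Notation V0 := (zero_sp L).

Lemma e_neq0 j : e j != 0.
Proof.
apply/eqP => H.
have := @indep 1%N (fun _ => j) (fun _ => 1).
have inj : injective (fun _ : 'I_1 => j) by move=> u w _; rewrite (ord1 u) (ord1 w).
move=> /(_ inj); rewrite big_ord1 H scaler0 => /(_ erefl ord0) /eqP; by rewrite oner_eq0.
Qed.

Lemma Wq_scale (Q : I -> Prop) j c : Q j -> Wq e Q (c *: e j).
Proof.
move=> Qj; have [S0 Sl] := span_subspace (fun z => exists j, Q j /\ z = e j).
by have := Sl c (e j) 0 (span_in (ex_intro _ j (conj Qj erefl))) S0; rewrite addr0.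
Qed.

Lemma a_sig_None sigma js : ~ a_sig V0 prod e sigma js None.
Proof. by move=> [[z [Pz nz]] H]; apply: nz; apply: H. Qed.

Lemma a_sig_uniq sigma js r o : a_sig V0 prod e sigma js (Some r) ->
  a_sig V0 prod e sigma js o -> o = Some r.
Proof.
case: o => [r'|]; last by move=> _ /a_sig_None.
move=> [[z [Pz nz]] H1] [_ H2].
case: (excluded_middle_informative (r' = r)) => [->//|ne].
exfalso; apply: nz.
have [c E1] := H1 z Pz; have [c' E2] := H2 z Pz.
apply: (@Wq_disj F L I e indep (fun j => j = r)); first by rewrite E1; exact: Wq_scale.
by rewrite E2; exact: Wq_scale.
Qed.

Lemma span_ext (S S' : L -> Prop) : (forall z, S z <-> S' z) -> Defs.span S = Defs.span S'.
Proof.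
move=> H; apply: functional_extensionality => x; apply: propositional_extensionality.
split; move=> [k [v [a [Sv ->]]]]; exists k, v, a; split => // t; by apply/H.
Qed.

Lemma prodset_perm (A A' : 'I_m.+2 -> L -> Prop) (tau sigma : 'S_m.+2) :
  (forall r, tau (tau r) = r) -> (forall r, A' r = A (tau r)) ->
  prodset prod (sigma * tau)%g A' = prodset prod sigma A.
Proof.
move=> ht hA; apply: span_ext => z; split.
  move=> [x [Hx ->]]; exists (fun r => x (tau r)); split.
    by move=> r; have := Hx (tau r); rewrite hA ht.
  by congr prod; apply: functional_extensionality => r; rewrite permM.
move=> [x [Hx ->]]; exists (fun r => x (tau r)); split.
  by move=> r; rewrite hA.
by congr prod; apply: functional_extensionality => r; rewrite permM ht.
Qed.

Lemma a_sig_perm (js js' : 'I_m.+2 -> option I) (tau sigma : 'S_m.+2) o :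
  (forall r, tau (tau r) = r) -> (forall r, js' r = js (tau r)) ->
  a_sig V0 prod e (sigma * tau)%g js' o <-> a_sig V0 prod e sigma js o.
Proof.
move=> ht hj; rewrite /a_sig.
rewrite (@prodset_perm (fun r => u_ V0 e (js r)) (fun r => u_ V0 e (js' r)) tau sigma ht) //.
by move=> r; rewrite hj.
Qed.

Definition step (z w : I) := exists b X, mu V0 prod e (b, Some z) X (Some w).

Definition tau01 : 'S_m.+2 := tperm ord0 (lift ord0 ord0).

Lemma swap_ins (T : Type) (a b : T) (rest : 'I_m -> T) r :
  ins ord0 a (ins ord0 b rest) r = ins ord0 b (ins ord0 a rest) (tau01 r).
Proof.
rewrite /tau01; case: (unliftP ord0 r) => [r1|] ->; last by rewrite tpermL ins_k ins_lift ins_k.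
case: (unliftP ord0 r1) => [r2|] ->; last by rewrite tpermR ins_lift !ins_k.
by rewrite tpermD ?ins_lift //.
Qed.

Lemma step_sym z w : step z w -> step w z.
Proof.
move=> [b [[xb tl] H]].
case: b H; case: xb => //= H.
-
  move: H => [k [sigma H]].
  exists true, (false, tl) => /=; exists k, (sigma * tau01)%g => o.
  rewrite -H; apply: a_sig_perm; first exact: tpermK.
  by move=> r; rewrite swap_ins.
-
  move: H => [sigma H]; exists false, (false, tl) => /=; exists sigma.
  by apply/H.
-
  move: H => [sigma H]; exists false, (true, tl) => /=; exists sigma => o.
  split; first by move=> H'; apply: (a_sig_uniq H H').
  by move=> ->.
Qed.

Inductive reach : I -> I -> Prop :=
| rrefl x : reach x x
| rstep x y z : reach x y -> step y z -> reach x z.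

Lemma reach_trans x y z : reach x y -> reach y z -> reach x z.
Proof. move=> H1 H2; elim: H2 H1 => // a b c _ IH s H; apply: rstep (IH H) s. Qed.

Lemma reach_sym x y : reach x y -> reach y x.
Proof.
elim => [a|a b c _ IH s]; first exact: rrefl.
apply: reach_trans IH; apply: rstep (rrefl _) _; exact: step_sym.
Qed.

Local Notation phiV := (phi V0 prod e).

Lemma foldl_reach b i (Xs : seq (@Xtype m I)) p :
  foldl phiV (fun z => z = (b, i)) Xs p -> reach i p.2.
Proof.
elim/last_ind: Xs p => [|Xs X IH] p /=; first by move=> ->; exact: rrefl.
rewrite foldl_rcons => [[jj [Hj Hmu]]].
apply: rstep (IH _ Hj) _; by exists jj.1, X.
Qed.

Lemma foldl_nonempty (Ys : seq (@Xtype m I)) T : (exists z, foldl phiV T Ys z) -> exists z, T z.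
Proof.
elim: Ys T => [|Y Ys IH] T //= /IH [z [jj [Hj _]]]; by exists jj.
Qed.

Lemma reach_foldl i j : reach i j -> i = j \/
  exists (Xs : seq (@Xtype m I)) b, (0 < size Xs)%N /\ forall f, foldl phiV (fun z => z = (b, i)) Xs (f, j).
Proof.
elim => [a|a y c _ IH [b [X H]]]; first by left.
right; case: IH => [E|[Xs [b' [sz H']]]].
  subst y; exists [:: X], b; split => // f /=; by exists (b, a).
exists (rcons Xs X), b'; split; first by rewrite size_rcons.
move=> f; rewrite foldl_rcons; exists (b, y); split => //; exact: H'.
Qed.

Lemma connected_reach i j : connected V0 prod e i j <-> reach i j.
Proof.
split.
  case=> [->|[_ [Xs [b [_ [_ H]]]]]]; first exact: rrefl.
  exact: (foldl_reach H).
move=> /reach_foldl [->|[Xs [b [sz H]]]]; first by left.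
case: (excluded_middle_informative (i = j)) => [->|ne]; first by left.
right; split => //; exists Xs, b; split => //; split => // k _.
apply: (@foldl_nonempty (drop k Xs)); exists (false, j).
by rewrite -foldl_cat cat_take_drop.
Qed.

Lemma step_of_prod (idx : 'I_m.+2 -> I) (a : F) j p :
  prod (fun r => e (idx r)) = a *: e j -> a != 0 -> step (idx p) j.
Proof.
move=> Hp a0.
pose tau : 'S_m.+2 := tperm ord0 p.
pose tl : 'I_m.+1 -> option I := fun s => Some (idx (tau (lift ord0 s))).
exists false, (false, tl) => /=; exists tau.
have Hjs r : ins ord0 (Some (idx p)) tl r = Some (idx (tau r)).
  case: (unliftP ord0 r) => [r'|] ->; first by rewrite ins_lift.
  by rewrite ins_k /tau tpermL.
set w := prod (fun r => e (idx r)).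
have EP : prodset prod tau (fun r => u_ V0 e (ins ord0 (Some (idx p)) tl r)) =
          Defs.span (fun z => z = w).
  apply: span_ext => z; split.
    move=> [x [Hx ->]]; rewrite /w; congr prod; apply: functional_extensionality => r.
    by have := Hx (tau r); rewrite Hjs /= tpermK.
  move=> ->; exists (fun r => e (idx (tau r))); split; first by move=> r; rewrite Hjs.
  by rewrite /w; congr prod; apply: functional_extensionality => r; rewrite tpermK.
rewrite /a_sig EP; split.
  exists w; split; first exact: span_in.
  by rewrite /w Hp; apply/eqP; rewrite scaler_eq0 negb_or a0 e_neq0.
apply: span_sub; last by move=> z ->; exists a.
split; first by exists 0; rewrite scale0r.
by move=> c x y [c1 ->] [c2 ->]; exists (c * c1 + c2); rewrite scalerDl scalerA.
Qed.

End Conn.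

Section Main.
Variables (F : fieldType) (L : lmodType F) (m : nat) (I : Type).
Variables (prod : ('I_m.+2 -> L) -> L) (e : I -> L).
Hypothesis indep : forall (k : nat) (c : 'I_k -> I) (a : 'I_k -> F), injective c ->
     \sum_(t < k) a t *: e (c t) = 0 -> forall t, a t = 0.
Hypothesis ML : multilinear prod.
Hypothesis Hspan : forall x : L, exists (k : nat) (c : 'I_k -> I) (a : 'I_k -> F),
       x = \sum_(t < k) a t *: e (c t).
Hypothesis Hmul : forall idx : 'I_m.+2 -> I,
     exists j, exists a : F, prod (fun r => e (idx r)) = a *: e j.
Local Notation V0 := (zero_sp L).

Lemma J_cl_Wq (C : I -> Prop) : J_cl V0 prod e C = Wq e C.
Proof.
apply: functional_extensionality => x; apply: propositional_extensionality; split.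
  by move=> [a [b [[_ a0] [Wb ->]]]]; rewrite a0 add0r.
move=> Wx; exists 0, x; split; last by rewrite add0r.
by split => //; exact: (span_subspace _).1.
Qed.

Lemma Wq_mono (Q Q' : I -> Prop) x : (forall j, Q j -> Q' j) -> Wq e Q x -> Wq e Q' x.
Proof.
move=> H [k [v [a [Sv ->]]]]; exists k, v, a; split => // t.
by have [j [Qj ->]] := Sv t; exists j; split => //; apply: H.
Qed.

Lemma cls_reach i j : cls V0 prod e i j <-> reach prod e i j.
Proof. exact: connected_reach. Qed.

Lemma cls_eq i1 i2 j : cls V0 prod e i1 j -> cls V0 prod e i2 j -> cls V0 prod e i1 = cls V0 prod e i2.
Proof.
move=> /cls_reach H1 /cls_reach H2.
apply: functional_extensionality => x; apply: propositional_extensionality.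
rewrite !cls_reach; split => H.
  exact: reach_trans H2 (reach_trans (reach_sym indep H1) H).
exact: reach_trans H1 (reach_trans (reach_sym indep H2) H).
Qed.

Lemma class_eq (C1 C2 : conn_classes V0 prod e) j :
  proj1_sig C1 j -> proj1_sig C2 j -> C1 = C2.
Proof.
case: C1 => [P1 [i1 E1]]; case: C2 => [P2 [i2 E2]] /= H1 H2.
apply: subset_eq_compat; subst; exact: cls_eq H1 H2.
Qed.

Lemma prod0 (x : 'I_m.+2 -> L) k : prod (fun r => if r == k then 0 else x r) = 0.
Proof.
have := ML x k 1 0 0; rewrite scaler0 add0r scale1r.
set p := prod _ => H.
by move: H => /(congr1 (fun v => v - p)); rewrite subrr addrK.
Qed.

Lemma prod_span (B : 'I_m.+2 -> L -> Prop) (P : L -> Prop) : subspace P ->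
  (forall x, (forall r, B r (x r)) -> P (prod x)) ->
  forall x, (forall r, Defs.span (B r) (x r)) -> P (prod x).
Proof.
move=> [P0 Pl] base.
suff claim : forall n x, (forall r : 'I_m.+2, (r < n)%N -> Defs.span (B r) (x r)) ->
    (forall r : 'I_m.+2, (n <= r)%N -> B r (x r)) -> P (prod x).
  by move=> x Hx; apply: (claim m.+2) => // r; rewrite leqNgt ltn_ord.
elim=> [|n IH] x H1 H2; first by apply: base => r; apply: H2.
have [hn|hn] := ltnP n m.+2; last first.
  apply: IH => r Hr; first by apply: H1; apply: ltn_trans Hr _.
  by move: (ltn_ord r); rewrite ltnNge (leq_trans hn Hr).
pose k : 'I_m.+2 := Ordinal hn.
pose f y := prod (fun r => if r == k then y else x r).
have Hf : forall y, Defs.span (B k) y -> P (f y).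
  apply: span_sub.
    split; first by rewrite /f prod0.
    by move=> a y z Py Pz; rewrite /f ML; apply: Pl.
  move=> y By; apply: IH.
    move=> r Hr; have -> : (r == k) = false.
      by apply/negbTE; apply/eqP => E; move: Hr; rewrite E ltnn.
    by apply: H1; apply: ltnW.
  move=> r Hr; case: eqP => [->//|ne]; apply: H2.
  by rewrite ltn_neqAle Hr andbT; apply/eqP => E; apply: ne; apply: val_inj.
have := Hf (x k) (H1 k (ltnSn n)).
by rewrite /f; congr P; congr prod; apply: functional_extensionality => r; case: eqP => // ->.
Qed.

Lemma span_all x : Defs.span (fun z => exists j, z = e j) x.
Proof.
have [k [c [a ->]]] := Hspan x.
by exists k, (fun t => e (c t)), a; split => // t; exists (c t).
Qed.

Lemma ideal_prop i (sigma : 'S_m.+2) z :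
  prodset prod sigma (fun r => if r == ord0 then Wq e (cls V0 prod e i) else (fun _ => True)) z ->
  Wq e (cls V0 prod e i) z.
Proof.
apply: span_sub; first exact: span_subspace.
move=> w [x [Hx ->]].
pose B (r : 'I_m.+2) : L -> Prop := fun y => exists j, (sigma r == ord0 -> cls V0 prod e i j) /\ y = e j.
apply: (@prod_span B); first exact: span_subspace.
  move=> x' Hx'.
  pose idx r := proj1_sig (constructive_indefinite_description _ (Hx' r)).
  have Hidx r : (sigma r == ord0 -> cls V0 prod e i (idx r)) /\ x' r = e (idx r) :=
    proj2_sig (constructive_indefinite_description _ (Hx' r)).
  have -> : x' = (fun r => e (idx r)).
    by apply: functional_extensionality => r; case: (Hidx r).
  have [j [a Ha]] := Hmul idx.
  rewrite Ha; have [->|a0] := eqVneq a 0.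
    by rewrite scale0r; exact: (span_subspace _).1.
  apply: Wq_scale.
  pose p := (sigma^-1)%g ord0.
  have Hp : sigma p == ord0 by rewrite /p permKV.
  have := (Hidx p).1 Hp => /cls_reach Hr.
  apply/cls_reach; apply: rstep Hr _; exact: (step_of_prod indep p Ha a0).
move=> r; have := Hx (sigma r); case: eqP => [E|ne] H.
  move: H => [k [v [a [Sv ->]]]]; exists k, v, a; split => // t.
  by have [j [Cj ->]] := Sv t; exists j; split.
have [k [v [a [Sv ->]]]] := span_all (x (sigma r)).
exists k, v, a; split => // t; have [j ->] := Sv t; exists j; split => //.
by move/eqP.
Qed.

End Main.

Theorem corollary3p13 (F : fieldType) (G : zmodType) (m : nat) (L : lmodType F)
  (eps : G -> G -> F) (Lg : G -> L -> Prop) (prod : ('I_m.+2 -> L) -> L)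
  (I : Type) (e : I -> L) :
  bicharacter eps ->
  color_gLt_algebra eps Lg prod ->
  mult_basis Lg prod (fun _ => True) (fun _ => True) e ->
  direct_sum (fun C : conn_classes (zero_sp L) prod e => J_cl (zero_sp L) prod e (proj1_sig C)) /\
  (forall i : I,
     color_ideal Lg prod (J_cl (zero_sp L) prod e (cls (zero_sp L) prod e i)) /\
     mult_basis Lg prod (J_cl (zero_sp L) prod e (cls (zero_sp L) prod e i))
                (cls (zero_sp L) prod e i) e).
Proof.
move=> _ [[ML [[LgS _] _]] _] [Hhom [Hind [Hsp Hmul]]].
have indep : forall (k : nat) (c : 'I_k -> I) (a : 'I_k -> F), injective c ->
     \sum_(t < k) a t *: e (c t) = 0 -> forall t, a t = 0.
  by move=> k c a ic; apply: Hind ic (fun _ => Logic.I).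
have Hspan : forall x : L, exists (k : nat) (c : 'I_k -> I) (a : 'I_k -> F),
       x = \sum_(t < k) a t *: e (c t).
  by move=> x; have [k [c [a [_ ->]]]] := (Hsp x).1 Logic.I; exists k, c, a.
have Hmul' : forall idx : 'I_m.+2 -> I,
     exists j, exists a : F, prod (fun r => e (idx r)) = a *: e j.
  by move=> idx; have [j [_ H]] := Hmul idx (fun _ => Logic.I); exists j.
have clsR i : cls (zero_sp L) prod e i i by left.
split.
  split; first by move=> C; rewrite J_cl_Wq; exact: span_subspace.
  split.
    move=> x; have [k [c [a ->]]] := Hspan x.
    exists k, (fun t => exist _ (cls (zero_sp L) prod e (c t)) (ex_intro _ (c t) erefl)),
      (fun t => a t *: e (c t)); split => // t /=.
    by rewrite J_cl_Wq; apply: Wq_scale.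
  move=> k c y ic Hy S0 t0.
  set C0 := proj1_sig (c t0).
  have Wy0 : Wq e C0 (y t0) by have := Hy t0; rewrite J_cl_Wq.
  have Wr : Wq e (fun j => ~ C0 j) (\sum_(t < k | t != t0) y t).
    apply: subspace_sum; first exact: span_subspace.
    move=> t tn; have := Hy t; rewrite J_cl_Wq; apply: Wq_mono => j Cj C0j.
    by move/negP: tn; apply; apply/eqP; apply: ic; apply: class_eq Cj C0j.
  apply: (Wq_disj indep Wy0).
  move: S0; rewrite (bigD1 t0) //= => /eqP; rewrite addr_eq0 => /eqP ->.
  by apply: subspaceN => //; exact: span_subspace.
move=> i; rewrite J_cl_Wq; split.
  split; last first.
    move=> sigma z; exact: (ideal_prop indep ML Hspan Hmul').
  split; first exact: span_subspace.
  move=> x /Wq_repr [k [c [a [Cc ->]]]].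
  pose g t := proj1_sig (constructive_indefinite_description _ (Hhom (c t) Logic.I)).
  have Hg t : Lg (g t) (e (c t)) := proj2_sig (constructive_indefinite_description _ (Hhom (c t) Logic.I)).
  exists k, g, (fun t => a t *: e (c t)); split => // t; split.
    by have [_ Hl] := LgS (g t); have := Hl (a t) _ 0 (Hg t) (LgS (g t)).1; rewrite addr0.
  exact: Wq_scale.
split; first by move=> j _; exact: Hhom.
split; first by move=> k c a ic _; exact: indep ic.
split.
  move=> x; split; first by move=> /Wq_repr.
  move=> [k [c [a [Cc ->]]]]; exists k, (fun t => e (c t)), a; split => // t.
  by exists (c t).
move=> idx Hidx.
have [j [a Ha]] := Hmul' idx.
have [a0|a0] := eqVneq a 0.
  by exists i; split => //; exists 0; rewrite Ha a0 !scale0r.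
exists j; split; last by exists a.
have := Hidx ord0 => /(cls_reach prod e) Hr.
apply/cls_reach; apply: rstep Hr _; exact: (step_of_prod indep ord0 Ha a0).
Qed.
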